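(* (Refinement Validity.) Consider an execution of the Aegean protocol described in the context, under the stated failure model, network model and Reasoning Refinement assumption. If the protocol outputs a solution $s$, then $s$ satisfies refinement validity: $Q(t,s)\ge Q(t,s^* )$ for some majority optimal solution $s^*$.
   Context: Setting. A single task description $t$ (a string) is given to all agents. A Quality Oracle is a deterministic function $Q:\Sigma^*\times\Sigma^*\to\mathbb{R}$ that maps a task description and a solution string to a real number, the quality of the solution for the task; it is unknown to the agents. There are $N$ agents $A_0,\dots,A_{N-1}$. Each agent is a state machine with an internal context $c$ and a reasoning function $\mathcal{R}:(c,\text{string})\mapsto(c',\text{string})$; the input string is either the task description or a string combining a list of solutions with their reasoning traces, and the output string contains a solution together with a reasoning trace (context input/output is left implicit, writing $r\gets\mathcal{R}(x)$). Majority optimal solution: supposing each agent individually generates a solution to $t$, a majority optimal solution is a solution of maximal $Q$-quality among the individual solutions generated by some simple majority of the agents. Reasoning Refinement assumption: for any set $S$ of solutions (with reasoning traces) and any agent, if the agent applies its reasoning function to a string $\bar s$ combining all solutions in $S$, then $Q(t,\mathcal{R}(\bar s))\ge Q(t,s)$ for every $s\in S$. Failure/network model: agents fail only by stopping (fail-stop; a failed agent stops responding but never deviates from the protocol); at most $\lceil (N-1)/2\rceil$ agents fail; a quorum is any set of a majority of the agents, so any two quorums intersect. Agents are fully connected and the network is partially synchronous: after some finite but unknown time, every message is delivered within a bounded delay. The Aegean protocol. Execution proceeds in terms, numbered increasingly; each agent keeps a term number, a role (leader, candidate or worker), an id, a round number, and a stored refinement set refmset. Leader election: an agent entering a new term broadcasts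 RequestVote(term) and becomes candidate; an agent receiving a RequestVote with a higher term adopts that term, becomes worker and replies Vote; each agent casts at most one vote per term (a candidate votes for itself); a candidate receiving votes from a quorum of distinct agents for its term becomes leader; on lack of progress agents time out, advance the term and retry. Hence there is at most one leader per term. First term: the leader broadcasts Task(term, $t$); each agent computes $s\gets\mathcal{R}(t)$ and sends Solution(term, id, $s$) to the leader; the leader collects Solution messages from a quorum of distinct agents (including itself), lets $\bar R$ be the set of these solutions, sets round to $1$ and broadcasts RefmSet(term, round, $\bar R$). Refinement rounds: an agent receiving a RefmSet with round number no less than its own stores $\bar R$ as its refmset, updates its round number, computes $r\gets\mathcal{R}(\bar R)$ and sends Refm(term, id, round, $r$) to the leader; the leader collects Refm messages with matching round from a quorum of distinct agents, lets $\bar R$ be the set of these refined solutions (the refinement set of that round), inputs (term, round, $\bar R$) to the refinement decision engine, increments its round number and broadcasts RefmSet(term, round, $\bar R$); this repeats until a solution is output. Leader change: a newly elected leader broadcasts NewTerm(term); an agent receiving NewTerm with a term greater than its own replies NewTermAck(new term, its current term, id, its round, its refmset) and adopts the new term; upon NewTermAcks with matching new term from a quorum, the new leader selects the ack with the highest (old) term, breaking ties by highest round, sets its round to $1$ and broadcasts RefmSet(term, 1, $\bar R$) with $\bar R$ taken from the selected ack; then normal refinement rounds proceed. Refinement decision engine: only the leader outputs solutions; in a term, a solution output ''in round $i$'' must belong to the refinement set of round $i$, may only be output once the leader has collected the refinement set of round $i+1$, and at most one solution is output per round. Users may impose additional output criteria (e.g. requiring at least $\alpha$ semantically equivalent solutions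 in a refinement set, or that a solution appear in $\beta$ consecutive rounds' refinement sets). *)

(* Defs.v *)
From mathcomp Require Import all_boot.
From Stdlib Require Import Reals.

Set Implicit Arguments.
Unset Strict Implicit.
Unset Printing Implicit Defensive.

(*   enc     : the (fixed) way a list of solutions with their reasoning traces *)
(*             is combined into one input string for the reasoning function    *)
(*   crit    : additional user output criterion of the decision engine,        *)
(*             crit term round history s (arbitrary)                           *)
Record Setup := {
  N : nat;
  Sym : Type;
  Ctx : Type;
  task : seq Sym;
  enc : seq (seq Sym) -> seq Sym;
  reason : 'I_N -> Ctx -> seq Sym -> Ctx * seq Sym;
  ctx0 : 'I_N -> Ctx;
  crit : nat -> nat -> seq (nat * seq (seq Sym)) -> seq Sym -> Prop
}.

Definition Str (S : Setup) := seq (Sym S).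
Definition agent (S : Setup) := 'I_(N S).

Definition quorum (S : Setup) (l : seq (agent S)) : bool :=
  (N S < 2 * size (undup l))%N.

Inductive payload (S : Setup) :=
| RequestVote (T : nat)
| Vote (T : nat)
| Task (T : nat) (t : Str S)
| Solution (T : nat) (id : agent S) (s : Str S)
| RefmSet (T r : nat) (R : seq (Str S))
| Refm (T : nat) (id : agent S) (r : nat) (x : Str S)
| NewTerm (T : nat)
| NewTermAck (T oldT : nat) (id : agent S) (r : nat) (R : option (seq (Str S))).

Record msg (S : Setup) := Msg { src : agent S; dst : agent S; pay : payload S }.

Inductive role := Leader | Candidate | Worker.

(* leader sub-phase: collecting Solutions, collecting NewTermAcks, refining *)
Inductive lphase := PNone | PSol | PAck | PRefine.

Record ackrec (S : Setup) :=
  Ack { a_old : nat; a_id : agent S; a_round : nat; a_R : option (seq (Str S)) }.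

Record lstate (S : Setup) := LState {
  alive : bool;
  term : nat;
  rol : role;
  round : nat;
  refmset : option (seq (Str S));
  ctx : Ctx S;
  votes : seq (agent S);
  phase : lphase;
  coll : seq (agent S * Str S);       (* Solution / Refm messages collected (leader) *)
  acks : seq (ackrec S);
  hist : seq (nat * seq (Str S));     (* refinement sets collected in this term *)
  outr : seq nat                      (* rounds in which a solution was output *)
}.

Definition enter S (st : lstate S) T r (v : seq (agent S)) : lstate S :=
  LState (alive st) T r 0 (refmset st) (ctx st) v PNone [::] [::] [::] [::].

Definition adopt S (st : lstate S) T := enter st T Worker [::].

Definition with_lead S (st : lstate S) ph rnd (c : seq (agent S * Str S)) a h : lstate S :=
  LState (alive st) (term st) Leader rnd (refmset st) (ctx st) (votes st) ph c a h (outr st).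

Definition with_refm S (st : lstate S) r R c : lstate S :=
  LState (alive st) (term st) (rol st) r (Some R) c (votes st) (phase st) (coll st)
         (acks st) (hist st) (outr st).

Definition with_ctx S (st : lstate S) c : lstate S :=
  LState (alive st) (term st) (rol st) (round st) (refmset st) c (votes st) (phase st)
         (coll st) (acks st) (hist st) (outr st).

Definition with_votes S (st : lstate S) v : lstate S :=
  LState (alive st) (term st) (rol st) (round st) (refmset st) (ctx st) v (phase st)
         (coll st) (acks st) (hist st) (outr st).

Definition with_outr S (st : lstate S) o : lstate S :=
  LState (alive st) (term st) (rol st) (round st) (refmset st) (ctx st) (votes st) (phase st)
         (coll st) (acks st) (hist st) o.

Definition kill S (st : lstate S) : lstate S :=
  LState false (term st) (rol st) (round st) (refmset st) (ctx st) (votes st) (phase st)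
         (coll st) (acks st) (hist st) (outr st).

Definition bcast S (i : agent S) (p : payload S) : seq (msg S) :=
  [seq Msg i j p | j <- enum 'I_(N S)].

Definition lex_le (a b : nat * nat) : bool :=
  (a.1 < b.1)%N || ((a.1 == b.1) && (a.2 <= b.2)%N).

(* [handle i st from p st' out g]: agent i in local state st processes payload p
   sent by [from]; it moves to st', sends the messages out, and g lists the
   individual solutions R(t) it generated (for the task). *)
Inductive handle (S : Setup) (i : agent S) (st : lstate S) (from : agent S) :
  payload S -> lstate S -> seq (msg S) -> seq (agent S * Str S) -> Prop :=
| H_RequestVote T :
    (term st < T)%N ->
    handle i st from (@RequestVote S T) (adopt st T) [:: Msg i from (@Vote S T)] [::]
| H_Vote_wait T :
    rol st = Candidate -> term st = T ->
    ~~ quorum (undup (from :: votes st)) ->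
    handle i st from (@Vote S T) (with_votes st (undup (from :: votes st))) [::] [::]
| H_Vote_elected_first T :
    rol st = Candidate -> term st = T -> T = 1 ->
    quorum (undup (from :: votes st)) ->
    handle i st from (@Vote S T)
      (with_lead (with_votes st (undup (from :: votes st))) PSol 0 [::] [::] [::])
      (bcast i (@Task S T (task S))) [::]
| H_Vote_elected_change T :
    rol st = Candidate -> term st = T -> T <> 1 ->
    quorum (undup (from :: votes st)) ->
    handle i st from (@Vote S T)
      (with_lead (with_votes st (undup (from :: votes st))) PAck 0 [::] [::] [::])
      (bcast i (@NewTerm S T)) [::]
| H_Task T t :
    (term st <= T)%N ->
    let st0 := if (term st < T)%N then adopt st T else st in
    let cr := reason i (ctx st0) t in
    handle i st from (@Task S T t) (with_ctx st0 cr.1)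
      [:: Msg i from (Solution T i cr.2)] [:: (i, cr.2)]
| H_Solution_wait T j s :
    rol st = Leader -> term st = T -> phase st = PSol ->
    j \notin map fst (coll st) ->
    ~~ quorum (map fst (rcons (coll st) (j, s))) ->
    handle i st from (Solution T j s)
      (with_lead st PSol (round st) (rcons (coll st) (j, s)) (acks st) (hist st)) [::] [::]
| H_Solution_done T j s :
    rol st = Leader -> term st = T -> phase st = PSol ->
    j \notin map fst (coll st) ->
    quorum (map fst (rcons (coll st) (j, s))) ->
    handle i st from (Solution T j s)
      (with_lead st PRefine 1 [::] (acks st) (hist st))
      (bcast i (RefmSet T 1 (map snd (rcons (coll st) (j, s))))) [::]
| H_RefmSet T r R :
    (term st < T)%N \/ (term st = T /\ (round st <= r)%N) ->
    let st0 := if (term st < T)%N then adopt st T else st in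
    let cr := reason i (ctx st0) (enc R) in
    handle i st from (RefmSet T r R) (with_refm st0 r R cr.1)
      [:: Msg i from (Refm T i r cr.2)] [::]
| H_Refm_wait T j r x :
    rol st = Leader -> term st = T -> phase st = PRefine -> round st = r ->
    j \notin map fst (coll st) ->
    ~~ quorum (map fst (rcons (coll st) (j, x))) ->
    handle i st from (Refm T j r x)
      (with_lead st PRefine r (rcons (coll st) (j, x)) (acks st) (hist st)) [::] [::]
| H_Refm_done T j r x :
    rol st = Leader -> term st = T -> phase st = PRefine -> round st = r ->
    j \notin map fst (coll st) ->
    quorum (map fst (rcons (coll st) (j, x))) ->
    let Rb := map snd (rcons (coll st) (j, x)) in
    handle i st from (Refm T j r x)
      (with_lead st PRefine r.+1 [::] (acks st) (rcons (hist st) (r, Rb)))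
      (bcast i (RefmSet T r.+1 Rb)) [::]
| H_NewTerm T :
    (term st < T)%N ->
    handle i st from (@NewTerm S T) (adopt st T)
      [:: Msg i from (NewTermAck T (term st) i (round st) (refmset st))] [::]
| H_Ack_wait T oT j r R :
    rol st = Leader -> term st = T -> phase st = PAck ->
    j \notin map (@a_id S) (acks st) ->
    ~~ quorum (map (@a_id S) (rcons (acks st) (Ack oT j r R))) ->
    handle i st from (NewTermAck T oT j r R)
      (with_lead st PAck (round st) (coll st) (rcons (acks st) (Ack oT j r R)) (hist st))
      [::] [::]
| H_Ack_none T oT j r R :
    rol st = Leader -> term st = T -> phase st = PAck ->
    j \notin map (@a_id S) (acks st) ->
    let A := rcons (acks st) (Ack oT j r R) in
    quorum (map (@a_id S) A) ->
    (forall a, List.In a A -> a_R a = None) ->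
    handle i st from (NewTermAck T oT j r R)
      (with_lead st PSol 0 [::] A (hist st)) (bcast i (@Task S T (task S))) [::]
| H_Ack_select T oT j r R a R0 :
    rol st = Leader -> term st = T -> phase st = PAck ->
    j \notin map (@a_id S) (acks st) ->
    let A := rcons (acks st) (Ack oT j r R) in
    quorum (map (@a_id S) A) ->
    List.In a A -> a_R a = Some R0 ->
    (forall b, List.In b A -> a_R b <> None ->
       lex_le (a_old b, a_round b) (a_old a, a_round a)) ->
    handle i st from (NewTermAck T oT j r R)
      (with_lead st PRefine 1 [::] A (hist st)) (bcast i (RefmSet T 1 R0)) [::].

Record gstate (S : Setup) := GState {
  loc : agent S -> lstate S;
  net : seq (msg S);
  gen : seq (agent S * Str S);       (* individual solutions R(t) generated so far *)
  outs : seq (Str S)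
}.

Definition upd S (f : agent S -> lstate S) (i : agent S) (x : lstate S) :=
  fun j => if j == i then x else f j.

Definition init_state (S : Setup) : gstate S :=
  @GState S (fun j : agent S => @LState S true 0 Worker 0 None (ctx0 j) [::] PNone [::] [::] [::] [::])
         [::] [::] [::].

Definition n_failed S (g : gstate S) : nat := #|[set j | ~~ alive (loc g j)]|.

Inductive step (S : Setup) : gstate S -> gstate S -> Prop :=
| S_timeout g i :
    alive (loc g i) ->
    let T := (term (loc g i)).+1 in
    step g (GState (upd (loc g) i (enter (loc g i) T Candidate [:: i]))
                   (net g ++ bcast i (@RequestVote S T)) (gen g) (outs g))
| S_crash g i :
    alive (loc g i) -> (n_failed g < (N S) %/ 2)%N ->
    step g (GState (upd (loc g) i (kill (loc g i))) (net g) (gen g) (outs g))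
| S_deliver g n1 m n2 st' out gs :
    net g = n1 ++ m :: n2 ->
    alive (loc g (dst m)) ->
    handle (dst m) (loc g (dst m)) (src m) (pay m) st' out gs ->
    step g (GState (upd (loc g) (dst m) st') (n1 ++ n2 ++ out) (gen g ++ gs) (outs g))
| S_drop g n1 m n2 :
    net g = n1 ++ m :: n2 ->
    step g (GState (loc g) (n1 ++ n2) (gen g) (outs g))
| S_output g i k Rk R' s :
    alive (loc g i) -> rol (loc g i) = Leader ->
    List.In (k, Rk) (hist (loc g i)) -> List.In s Rk ->
    List.In (k.+1, R') (hist (loc g i)) ->
    k \notin outr (loc g i) ->
    crit (term (loc g i)) k (hist (loc g i)) s ->
    step g (GState (upd (loc g) i (with_outr (loc g i) (k :: outr (loc g i))))
                   (net g) (gen g) (rcons (outs g) s)).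

Inductive reachable (S : Setup) : gstate S -> Prop :=
| R_init : reachable (init_state S)
| R_step g g' : reachable g -> step g g' -> reachable g'.

Definition reasoning_refinement (S : Setup) (Q : Str S -> Str S -> R) : Prop :=
  forall (i : agent S) (c : Ctx S) (L : seq (Str S)) (s : Str S),
    List.In s L -> Rle (Q (task S) s) (Q (task S) (reason i c (enc L)).2).

Definition majority_optimal (S : Setup) (Q : Str S -> Str S -> R) (g : gstate S)
    (sstar : Str S) : Prop :=
  exists (M : {set agent S}) (f : agent S -> Str S),
    (N S < 2 * #|M|)%N /\
    (forall j, j \in M -> List.In (j, f j) (gen g)) /\
    (exists2 j0, j0 \in M & sstar = f j0) /\
    (forall j, j \in M -> Rle (Q (task S) (f j)) (Q (task S) sstar)).

(* Main.v *)
Require Import Defs.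
From mathcomp Require Import all_boot.
From Stdlib Require Import Reals.

Set Implicit Arguments.
Unset Strict Implicit.

Definition MO (S : Setup) (Q : Str S -> Str S -> R) (gl : seq (agent S * Str S))
  (ss : Str S) : Prop :=
  exists (M : {set agent S}) (f : agent S -> Str S),
    (Defs.N S < 2 * #|M|)%N /\
    (forall j, j \in M -> List.In (j, f j) gl) /\
    (exists2 j0, j0 \in M & ss = f j0) /\
    (forall j, j \in M -> Rle (Q (task S) (f j)) (Q (task S) ss)).

Definition good S Q gl (x : Str S) :=
  exists ss, @MO S Q gl ss /\ Rle (Q (task S) ss) (Q (task S) x).

Definition weak S Q gl (Rs : seq (Str S)) := exists y, List.In y Rs /\ @good S Q gl y.

Definition msg_ok S Q gl (p : payload S) : Prop :=
  match p with
  | Solution _ j s => List.In (j, s) gl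
  | RefmSet _ _ Rs => @weak S Q gl Rs
  | Refm _ _ _ x => @good S Q gl x
  | NewTermAck _ _ _ _ (Some Rs) => @weak S Q gl Rs
  | _ => True
  end.

Definition loc_ok S Q gl (st : lstate S) : Prop :=
  (forall Rs, refmset st = Some Rs -> @weak S Q gl Rs) /\
  (phase st = PSol -> forall p, List.In p (coll st) -> List.In p gl) /\
  (phase st = PRefine -> forall p, List.In p (coll st) -> @good S Q gl p.2) /\
  (forall a Rs, List.In a (acks st) -> a_R a = Some Rs -> @weak S Q gl Rs) /\
  (forall k Rk x, List.In (k, Rk) (hist st) -> List.In x Rk -> @good S Q gl x).

Definition inv S Q (g : gstate S) : Prop :=
  (forall j, @loc_ok S Q (gen g) (loc g j)) /\
  (forall m, List.In m (net g) -> @msg_ok S Q (gen g) (pay m)) /\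
  (forall s, List.In s (outs g) -> @good S Q (gen g) s).

Definition incl S (gl gl' : seq (agent S * Str S)) := forall p, List.In p gl -> List.In p gl'.

Lemma MO_mono S Q gl gl' ss : @incl S gl gl' -> @MO S Q gl ss -> @MO S Q gl' ss.
Proof.
move=> Hi [M [f [H1 [H2 [H3 H4]]]]]; exists M, f; split; [done|split; [|done]].
by move=> j /H2 /Hi.
Qed.

Lemma good_mono S Q gl gl' x : @incl S gl gl' -> @good S Q gl x -> @good S Q gl' x.
Proof. move=> Hi [ss [H1 H2]]; exists ss; split=> //; exact: MO_mono H1. Qed.

Lemma weak_mono S Q gl gl' x : @incl S gl gl' -> @weak S Q gl x -> @weak S Q gl' x.
Proof. move=> Hi [y [H1 H2]]; exists y; split=> //; exact: good_mono H2. Qed.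

Lemma msg_mono S Q gl gl' p : @incl S gl gl' -> @msg_ok S Q gl p -> @msg_ok S Q gl' p.
Proof.
move=> Hi; case: p => //=.
- by move=> _ j s /Hi.
- by move=> _ _ Rs; apply: weak_mono.
- by move=> _ _ _ x; apply: good_mono.
- by move=> _ _ _ _ [Rs|] //; apply: weak_mono.
Qed.

Lemma loc_mono S Q gl gl' st : @incl S gl gl' -> @loc_ok S Q gl st -> @loc_ok S Q gl' st.
Proof.
move=> Hi [H1 [H2 [H3 [H4 H5]]]]; split; [|split; [|split; [|split]]].
- by move=> Rs /H1; apply: weak_mono.
- by move=> Hp p /(H2 Hp) /Hi.
- by move=> Hp p /(H3 Hp); apply: good_mono.
- by move=> a Rs Ha Hr; apply: weak_mono (H4 a Rs Ha Hr).
- by move=> k Rk x Hk Hx; apply: good_mono (H5 k Rk x Hk Hx).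
Qed.

Lemma incl_app S (gl e : seq (agent S * Str S)) : @incl S gl (gl ++ e).
Proof. by move=> p Hp; apply: List.in_or_app; left. Qed.

Lemma In_rcons T (s : seq T) x y : List.In y (rcons s x) <-> List.In y s \/ y = x.
Proof.
rewrite -cats1 List.in_app_iff /=; split.
- by move=> [H|[H|H]]; [left|right|].
- by move=> [H|H]; [left|right; left].
Qed.

Lemma In_map_snd A B (L : seq (A * B)) p : List.In p L -> List.In p.2 (map snd L).
Proof. elim: L => //= q L IH [->|H]; [by left| right; exact: IH]. Qed.

Lemma In_map_snd_inv A B (L : seq (A * B)) y :
  List.In y (map snd L) -> exists p, List.In p L /\ p.2 = y.
Proof.
elim: L => //= q L IH [<-|H]; first by exists q; split=> //; left.
by case: (IH H) => p [H1 H2]; exists p; split=> //; right.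
Qed.

Lemma In_bcast S i p m : List.In m (@bcast S i p) -> pay m = p.
Proof.
rewrite /bcast; elim: (enum _) => //= j l IH [<-|H] //; exact: IH.
Qed.

Fixpoint lookup S (j : agent S) (L : seq (agent S * Str S)) : Str S :=
  match L with
  | [::] => [::]
  | p :: L' => if p.1 == j then p.2 else @lookup S j L'
  end.

Lemma lookupP S (j : agent S) L : j \in map fst L -> List.In (j, @lookup S j L) L.
Proof.
elim: L => //= p L IH; rewrite in_cons; have [E|Hne] := eqVneq p.1 j.
- by move=> _; left; case: p E => a b /= ->.
- by move=> H; right; apply: IH; move: H.
Qed.


Lemma argmax (T : eqType) (l : seq T) (F : T -> R) : l <> [::] ->
  exists j0, j0 \in l /\ forall j, j \in l -> Rle (F j) (F j0).
Proof.
elim: l => // a l IH _.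
case: l IH => [|b l] IH.
- exists a; split; first by rewrite mem_seq1.
  by move=> j; rewrite mem_seq1 => /eqP ->; apply: Rle_refl.
- case: (IH ltac:(done)) => j0 [Hj0 Hm].
  case: (Rle_dec (F a) (F j0)) => Hc.
  + exists j0; split; first by rewrite in_cons Hj0 orbT.
    by move=> j; rewrite in_cons => /orP [/eqP ->|/Hm].
  + exists a; split; first by rewrite in_cons eqxx.
    move=> j; rewrite in_cons => /orP [/eqP ->|/Hm H]; first by apply: Rle_refl.
    apply: Rle_trans H _; apply: Rlt_le; exact: Rnot_le_lt.
Qed.

Lemma quorum_weak S Q gl (L : seq (agent S * Str S)) :
  (forall p, List.In p L -> List.In p gl) ->
  (Defs.N S < 2 * size (undup (map fst L)))%N -> @weak S Q gl (map snd L).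
Proof.
move=> HL Hq.
have Hne : map fst L <> [::] by move=> E; rewrite E in Hq.
case: (argmax (fun j => Q (task S) (lookup j L)) Hne) => j0 [Hj0 Hm].
exists (lookup j0 L); split; first exact: (In_map_snd (lookupP Hj0)).
exists (lookup j0 L); split; last by apply: Rle_refl.
exists [set j | j \in map fst L], (fun j => lookup j L).
split; [|split; [|split]].
- rewrite cardsE -(eq_card (mem_undup _)).
  by move/card_uniqP: (undup_uniq (map fst L)) => ->.
- by move=> j; rewrite inE => /lookupP /HL.
- by exists j0; rewrite ?inE.
- by move=> j; rewrite inE => /Hm.
Qed.

Lemma loc_enter S Q gl st T r v : @loc_ok S Q gl st -> @loc_ok S Q gl (enter st T r v).
Proof. by case=> H1 _; split=> //. Qed.

Lemma loc_ctx S Q gl st c : @loc_ok S Q gl st -> @loc_ok S Q gl (with_ctx st c).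
Proof. by []. Qed.

Lemma loc_votes S Q gl st c : @loc_ok S Q gl st -> @loc_ok S Q gl (with_votes st c).
Proof. by []. Qed.

Lemma acks_ok S Q gl (st : lstate S) T oT j r R2 :
  (forall a Rs, List.In a (acks st) -> a_R a = Some Rs -> @weak S Q gl Rs) ->
  @msg_ok S Q gl (NewTermAck T oT j r R2) ->
  forall a Rs, List.In a (rcons (acks st) (Ack oT j r R2)) -> a_R a = Some Rs ->
  @weak S Q gl Rs.
Proof.
move=> H4 Hm a Rs /In_rcons [Ha|->] Hr; first exact: H4 Ha Hr.
by move: Hm; rewrite /= -/(a_R (Ack oT j r R2)) Hr.
Qed.

Lemma handle_ok S Q (HR : reasoning_refinement Q) gl i st from p st' out gs :
  @loc_ok S Q gl st -> @msg_ok S Q gl p -> @handle S i st from p st' out gs ->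
  @loc_ok S Q (gl ++ gs) st' /\ (forall m, List.In m out -> @msg_ok S Q (gl ++ gs) (pay m)).
Proof.
move=> Hl Hm H; move: Hl => [H1 [H2 [H3 [H4 H5]]]].
have Hl : loc_ok Q gl st by split; [|split; [|split; [|split]]].
case: H Hm.
- move=> T _ _; rewrite cats0; split; first exact: loc_enter.
  by move=> m [<-|].
- move=> T _ _ _ _; rewrite cats0; split=> //; exact: loc_votes.
- move=> T _ _ _ _ _; rewrite cats0; split.
    by split=> //=; split=> //; split=> //; split=> //.
  by move=> m /In_bcast ->.
- move=> T _ _ _ _ _; rewrite cats0; split.
    by split=> //=; split=> //; split=> //; split=> //.
  by move=> m /In_bcast ->.
- move=> T t _ st0 cr _; split.
    apply: loc_ctx; apply: (@loc_mono _ _ gl); first exact: incl_app.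
    rewrite /st0; case: ifP => _ //; exact: loc_enter.
  move=> m [<-|] //=; apply: List.in_or_app; right; left; done.
- move=> T j s _ _ Hp _ _ Hm; rewrite cats0; split=> //.
  split; [exact: H1|split; [|split; [by []|split; [exact: H4|exact: H5]]]].
  by move=> _ q /In_rcons [/(H2 Hp)|->].
- move=> T j s _ _ Hp _ Hq Hm; rewrite cats0; split.
    split; [exact: H1|split; [by []|split; [by []|split; [exact: H4|exact: H5]]]].
  move=> m /In_bcast -> /=; apply: quorum_weak Hq.
  by move=> q /In_rcons [/(H2 Hp)|->].
- move=> T r R2 _ st0 cr Hw; rewrite cats0.
  have Hl0 : loc_ok Q gl st0 by rewrite /st0; case: ifP => _ //; exact: loc_enter.
  split.
    case: Hl0 => _ [G2 [G3 [G4 G5]]].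
    split; [by move=> Rs [<-]|split; [exact: G2|split;[exact: G3|split;[exact: G4|exact: G5]]]].
  move=> m [<-|] //=.
  case: Hw => y [Hy [ss [Hmo Hle]]]; exists ss; split=> //.
  apply: Rle_trans Hle _; exact: HR.
- move=> T j r x _ _ Hp _ _ _ Hm; rewrite cats0; split=> //.
  split; [exact: H1|split; [by []|split; [|split; [exact: H4|exact: H5]]]].
  by move=> _ q /In_rcons [/(H3 Hp)|->].
- move=> T j r x _ _ Hp _ _ _ Rb Hm; rewrite cats0; split.
    split; [exact: H1|split; [by []|split; [by []|split; [exact: H4|]]]].
    move=> k Rk y /In_rcons [Hk|[_ ->]] Hy; first exact: H5 Hk Hy.
    case: (In_map_snd_inv Hy) => q [/In_rcons [Hq|Hq] <-]; first exact: H3 Hp q Hq.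
    by rewrite Hq.
  move=> m /In_bcast -> /=; exists x; split=> //.
  by apply: (In_map_snd (p := (j, x))); apply/In_rcons; right.
- move=> T _ _; rewrite cats0; split; first exact: loc_enter.
  move=> m [<-|] //=; case E: (refmset st) => [Rs|] //; exact: H1.
- move=> T oT j r R2 _ _ Hp _ _ Hm; rewrite cats0; split=> //.
  split; [exact: H1|split; [by []|split; [by []|split; [|exact: H5]]]].
  exact: acks_ok Hm.
- move=> T oT j r R2 _ _ Hp _ A _ HN Hm; rewrite cats0; split.
    split; [exact: H1|split; [by []|split; [by []|split; [|exact: H5]]]].
    by move=> a Rs Ha; rewrite HN.
  by move=> m /In_bcast ->.
- move=> T oT j r R2 a R3 _ _ Hp _ A _ Ha Hr _ Hm; rewrite cats0; split.
    split; [exact: H1|split; [by []|split; [by []|split; [|exact: H5]]]].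
    exact: acks_ok Hm.
  move=> m /In_bcast -> /=; exact: (acks_ok H4 Hm Ha Hr).
Qed.

Lemma upd_ok S (P : lstate S -> Prop) f i x :
  (forall j, P (f j)) -> P x -> forall j, P (@upd S f i x j).
Proof. by move=> Hf Hx j; rewrite /upd; case: (j == i). Qed.

Lemma inv_init S Q : @inv S Q (init_state S).
Proof.
split; [|split] => //.
Qed.

Lemma In_split_net T (n1 n2 : seq T) m y :
  List.In y (n1 ++ n2) -> List.In y (n1 ++ m :: n2).
Proof.
move=> H; case: (List.in_app_or _ _ _ H) => {}H; apply: List.in_or_app; [by left|by right; right].
Qed.

Lemma inv_step S Q (HR : reasoning_refinement Q) g g' :
  @inv S Q g -> step g g' -> @inv S Q g'.
Proof.
move=> Hi Hs; case: Hs Hi => {g g'}.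
- move=> g i _ T [HL [HN HO]]; split; [|split] => //=.
    by apply: upd_ok => //; apply: loc_enter.
  move=> m Hm; case: (List.in_app_or _ _ _ Hm) => [/HN //|/In_bcast -> //].
- move=> g i _ _ [HL [HN HO]]; split; [|split] => //=.
  by apply: upd_ok => //; apply: HL.
- move=> g n1 m n2 st' out gs Hnet _ Hh [HL [HN HO]].
  have Hm : List.In m (net g) by rewrite Hnet; apply: List.in_or_app; right; left.
  case: (handle_ok HR (HL (dst m)) (HN m Hm) Hh) => Hst Hout.
  split; [|split] => /=.
  + apply: upd_ok => // j; apply: loc_mono (HL j); exact: incl_app.
  + move=> y; rewrite catA => Hy'; case: (List.in_app_or _ _ _ Hy') => [Hy|/Hout //].
    apply: msg_mono (HN y _); first exact: incl_app.
    by rewrite Hnet; apply: In_split_net.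
  + by move=> s /HO; apply: good_mono; exact: incl_app.
- move=> g n1 m n2 Hnet [HL [HN HO]]; split; [|split] => //=.
  by move=> y Hy; apply: HN; rewrite Hnet; apply: In_split_net.
- move=> g i k Rk R' s _ _ Hk Hs _ _ _ [HL [HN HO]]; split; [|split] => //=.
    by apply: upd_ok => //; apply: HL.
  move=> y /In_rcons [/HO //|->].
  by case: (HL i) => _ [_ [_ [_ H5]]]; exact: H5 Hk Hs.
Qed.

Lemma inv_reach S Q (HR : reasoning_refinement Q) g : reachable g -> @inv S Q g.
Proof.
elim=> [|g1 g2 _ IH Hs]; first exact: inv_init.
exact: inv_step Hs.
Qed.

Unset Implicit Arguments.

Theorem lemma2 (S : Setup) (Q : Str S -> Str S -> R) :
  reasoning_refinement Q ->
  forall g : gstate S, reachable g ->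
  forall s : Str S, List.In s (outs g) ->
  exists sstar : Str S, majority_optimal Q g sstar /\ Rle (Q (task S) sstar) (Q (task S) s).
Proof.
move=> HR g Hg s Hs.
by case: (inv_reach HR Hg) => _ [_ HO]; exact: HO.
Qed.
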